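(* Consider $P(\omega)$ with the Michael topology. Assume that $[\omega]^{<\omega}\subseteq Y\subseteq P(\omega)$, $Y$ is countable, and $\mathcal{U}$ is a family of open subsets of $P(\omega)$ such that each finite subset of $Y$ is included in some member of $\mathcal{U}$. Then there are natural numbers $m_0<m_1<\cdots$ and (not necessarily distinct) $U_0,U_1,\ldots\in\mathcal{U}$ such that: (1) for each $y\in Y$, $y\in U_n$ for all but finitely many $n$; (2) for each $x\subseteq\omega$ and each $n$, if $x\cap(m_n,m_{n+1})=\emptyset$ then $x\in U_n$.
   Context: $P(\omega)$ is identified with the Cantor space $2^\omega$ via characteristic functions; this gives the Cantor topology on $P(\omega)$, with basic open sets $[s,n]=\{x\in P(\omega): x\cap\{0,\dots,n-1\}=s\}$ for $n\in\omega$, $s\subseteq\{0,\dots,n-1\}$. The Michael topology on $P(\omega)$ is the finer topology obtained from the Cantor topology by additionally declaring every infinite subset of $\omega$ (every element of $[\omega]^\omega$) to be an isolated point. $[\omega]^{<\omega}$ denotes the set of finite subsets of $\omega$. For natural numbers $a<b$, $(a,b)=\{k\in\omega : a<k<b\}$. *)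

(* Defs.v *)
(* P(omega) is identified with 2^omega: a subset of omega is
   its characteristic function  nat -> bool.  Subsets of P(omega) are
   predicates  (nat -> bool) -> Prop. *)
From Stdlib Require Import List Arith.

Definition Pw := nat -> bool.
Definition PwSet := Pw -> Prop.

Definition finite_sub (x : Pw) : Prop := exists n, forall k, x k = true -> k < n.
Definition infinite_sub (x : Pw) : Prop := ~ finite_sub x.

Definition cantor_open (U : PwSet) : Prop :=
  forall x, U x -> exists n, forall z, (forall k, k < n -> z k = x k) -> U z.

(* Michael topology: generated by the Cantor open sets together with the
   singletons {a} for infinite a.  Its open sets are exactly the unions
   V \cup A with V Cantor open and A a set of infinite subsets of omega. *)
Definition michael_open (U : PwSet) : Prop :=
  exists (V A : PwSet), cantor_open V /\ (forall a, A a -> infinite_sub a) /\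
    (forall x, U x <-> V x \/ A x).

Definition countable_set (Y : PwSet) : Prop :=
  exists f : nat -> Pw, forall y, Y y -> exists n, f n = y.

(* Main.v *)
Require Import Defs.
From Stdlib Require Import List Arith Lia Classical ClassicalEpsilon.

Fixpoint subs (m : nat) : list Pw :=
  match m with
  | 0 => (fun _ => false) :: nil
  | S m => subs m ++ map (fun x k => if Nat.eqb k m then true else x k) (subs m)
  end.

Lemma subs_fin : forall m z, In z (subs m) -> forall k, m <= k -> z k = false.
Proof.
  induction m; simpl; intros z Hz k Hk.
  - destruct Hz as [<-|[]]; reflexivity.
  - apply in_app_or in Hz. destruct Hz as [Hz|Hz].
    + apply IHm; auto; lia.
    + apply in_map_iff in Hz. destruct Hz as [x [<- Hx]].
      destruct (Nat.eqb_spec k m); [lia|]. apply IHm; auto; lia.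
Qed.

Lemma subs_all : forall m (x : Pw), exists z, In z (subs m) /\ (forall k, k < m -> z k = x k).
Proof.
  induction m; intros x.
  - exists (fun _ => false). simpl. split; auto. intros; lia.
  - destruct (IHm x) as [z [Hz Hzx]].
    destruct (x m) eqn:Hxm.
    + exists (fun k => if Nat.eqb k m then true else z k). split.
      * simpl. apply in_or_app. right. apply in_map_iff. exists z; auto.
      * intros k Hk. destruct (Nat.eqb_spec k m); subst; auto. apply Hzx; lia.
    + exists z. split.
      * simpl. apply in_or_app. left; auto.
      * intros k Hk. destruct (Nat.eq_dec k m); subst.
        -- rewrite Hxm. apply (subs_fin m); auto.
        -- apply Hzx; lia.
Qed.

Lemma list_bound (P : Pw -> nat -> Prop) (l : list Pw) :
  (forall s N N', N <= N' -> P s N -> P s N') ->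
  (forall s, In s l -> exists N, P s N) -> exists N, forall s, In s l -> P s N.
Proof.
  intros Hm. induction l as [|a l IH]; intros H.
  - exists 0. intros s [].
  - destruct (H a (or_introl eq_refl)) as [Na Ha].
    destruct IH as [Nl Hl]. { intros s Hs. apply H. right; auto. }
    exists (max Na Nl). intros s [<-|Hs].
    + apply (Hm _ Na); auto; lia.
    + apply (Hm _ Nl); auto; lia.
Qed.

Theorem lemma4p5 (Y : PwSet) (UU : PwSet -> Prop) :
  (forall x, finite_sub x -> Y x) ->
  countable_set Y ->
  (forall U, UU U -> michael_open U) ->
  (forall l : list Pw, (forall y, In y l -> Y y) ->
     exists U, UU U /\ forall y, In y l -> U y) ->
  exists (m : nat -> nat) (Us : nat -> PwSet),
    (forall n, m n < m (S n)) /\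
    (forall n, UU (Us n)) /\
    (forall y, Y y -> exists N, forall n, N <= n -> Us n y) /\
    (forall (x : Pw) n,
       (forall k, m n < k -> k < m (S n) -> x k = false) -> Us n x).
Proof.
  intros HF [f Hf] HUo HUl.
  assert (Hg : forall j, exists z, Y z /\ (Y (f j) -> z = f j)).
  { intros j. destruct (classic (Y (f j))) as [H|H].
    - exists (f j); auto.
    - exists (fun _ => false). split; [|tauto]. apply HF. exists 0; discriminate. }
  set (g := fun j => proj1_sig (constructive_indefinite_description _ (Hg j))).
  assert (HgY : forall j, Y (g j)).
  { intros j. unfold g. exact (proj1 (proj2_sig (constructive_indefinite_description _ (Hg j)))). }
  assert (Hgf : forall j, Y (f j) -> g j = f j).
  { intros j. unfold g. exact (proj2 (proj2_sig (constructive_indefinite_description _ (Hg j)))). }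
  assert (Hstep : forall n m, exists p : PwSet * nat,
    m < snd p /\ UU (fst p) /\ (forall j, j <= n -> fst p (g j)) /\
    (forall x, (forall k, m < k -> k < snd p -> x k = false) -> fst p x)).
  { intros n m.
    destruct (HUl (subs (S m) ++ map g (seq 0 (S n)))) as [U [HU HUin]].
    { intros y Hy. apply in_app_or in Hy. destruct Hy as [Hy|Hy].
      - apply HF. exists (S m). intros k Hk.
        destruct (le_lt_dec (S m) k) as [Hle|Hlt]; auto.
        rewrite (subs_fin _ _ Hy k Hle) in Hk; discriminate.
      - apply in_map_iff in Hy. destruct Hy as [j [<- _]]. auto. }
    destruct (HUo U HU) as [V [A [HV [HA HVA]]]].
    destruct (list_bound (fun s N => forall z, (forall k, k < N -> z k = s k) -> V z)
                (subs (S m))) as [N HN].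
    { intros s N N' HNN H z Hz. apply H. intros k Hk. apply Hz; lia. }
    { intros s Hs. assert (HUs : U s) by (apply HUin; apply in_or_app; auto).
      apply HVA in HUs. destruct HUs as [Vs|As].
      - apply HV; auto.
      - exfalso. apply (HA s As). exists (S m). intros k Hk.
        destruct (le_lt_dec (S m) k) as [Hle|Hlt]; auto.
        rewrite (subs_fin _ _ Hs k Hle) in Hk; discriminate. }
    exists (U, S (max m N)). simpl. split; [lia|]. split; auto. split.
    - intros j Hj. apply HUin. apply in_or_app. right. apply in_map_iff.
      exists j. split; auto. apply in_seq. lia.
    - intros x Hx. destruct (subs_all (S m) x) as [s [Hs Hsx]].
      apply HVA. left. apply (HN s Hs). intros k Hk.
      destruct (le_lt_dec (S m) k) as [Hle|Hlt].
      + rewrite (subs_fin _ _ Hs k Hle). apply Hx; lia.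
      + symmetry. apply Hsx; auto. }
  set (st := fun n m => proj1_sig (constructive_indefinite_description _ (Hstep n m))).
  assert (Hst : forall n m, m < snd (st n m) /\ UU (fst (st n m)) /\
       (forall j, j <= n -> fst (st n m) (g j)) /\
       (forall x, (forall k, m < k -> k < snd (st n m) -> x k = false) -> fst (st n m) x)).
  { intros n m. unfold st. exact (proj2_sig (constructive_indefinite_description _ (Hstep n m))). }
  set (mm := fix mm n := match n with 0 => 0 | S n => snd (st n (mm n)) end).
  exists mm, (fun n => fst (st n (mm n))).
  split; [|split; [|split]].
  - intros n. simpl. apply (proj1 (Hst n (mm n))).
  - intros n. apply (proj1 (proj2 (Hst n (mm n)))).
  - intros y Hy. destruct (Hf y Hy) as [j Hj]. exists j. intros n Hn.
    assert (E : g j = y) by (rewrite Hgf; rewrite Hj; auto).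
    rewrite <- E. apply (proj1 (proj2 (proj2 (Hst n (mm n))))). exact Hn.
  - intros x n Hx. apply (proj2 (proj2 (proj2 (Hst n (mm n))))). exact Hx.
Qed.
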